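(* Let $n,d\ge1$ and $\epsilon_i>0$. Consider datasets of voter $i$ of the form $D_i=\{\langle X_1,Z_1\rangle,\dots,\langle X_n,Z_n\rangle\}$ with $X_j,Z_j\in\mathbb{R}^d$, $\|X_j\|_2\le 1/2$, $\|Z_j\|_2\le 1/2$, and set $V_j=X_j-Z_j$. Define the approximate objective $$\hat f_{D_i}(\boldsymbol\beta)=\sum_{j=1}^n\sum_{k=0}^{2}\frac{f_1^{(k)}(0)}{k!}(\boldsymbol\beta^\top V_j)^k=\sum_{j=1}^n\Big(\ln\tfrac12+\sqrt{2/\pi}\,\boldsymbol\beta^\top V_j-\tfrac1\pi(\boldsymbol\beta^\top V_j)^2\Big),$$ where $f_1(z)=\ln\Phi(z)$ and $\Phi$ is the standard normal CDF. Write $\hat f_{D_i}(\boldsymbol\beta)=\sum_{w=0}^{2}\sum_{\phi\in\Psi_w}\big(\sum_{j=1}^n\lambda_{\phi,V_j}\big)\phi(\boldsymbol\beta)$, where $\Psi_w$ is the set of monomials $\beta[1]^{c_1}\cdots\beta[d]^{c_d}$ with $c_1+\dots+c_d=w$ and $\lambda_{\phi,V_j}$ is the coefficient of $\phi$ in the $j$-th summand. Let $\Delta_{\mathrm{upper}}=2\sqrt{2d/\pi}+2d/\pi$. Consider the randomized algorithm (Algorithm 3) which, for each $w\in\{0,1,2\}$ and each $\phi\in\Psi_w$, computes $\lambda_\phi=\sum_{j=1}^n\lambda_{\phi,V_j}+\eta_\phi$ with the $\eta_\phi$ independent zero-mean Laplace variables of scale $\Delta_{\mathrm{upper}}/\epsilon_i$,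 forms $f^*_{D_i}(\boldsymbol\beta)=\sum_{w=0}^2\sum_{\phi\in\Psi_w}\lambda_\phi\,\phi(\boldsymbol\beta)$, and outputs $\boldsymbol\beta_i^*\in\operatorname*{argmax}_{\boldsymbol\beta}f^*_{D_i}(\boldsymbol\beta)$ (computed from the noisy coefficients alone). Then this algorithm satisfies $\epsilon_i$-differential privacy in the record-level distributed sense (RLDP): for any two such datasets $D_i,D_i'$ of $n$ records differing in exactly one record and any measurable set $\mathcal{Y}$ of outputs, $\Pr[\boldsymbol\beta_i^*(D_i)\in\mathcal{Y}]\le e^{\epsilon_i}\Pr[\boldsymbol\beta_i^*(D_i')\in\mathcal{Y}]$.
   Context: The Laplace distribution with scale $\lambda$ has density $\frac{1}{2\lambda}e^{-|x|/\lambda}$. $\beta[k]$ denotes the $k$-th coordinate of $\boldsymbol\beta\in\mathbb{R}^d$. *)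

(* Defs.v *)
From HB Require Import structures.
From mathcomp Require Import all_boot all_order all_algebra.
From mathcomp Require Import all_classical all_reals all_analysis.
Set Implicit Arguments. Unset Strict Implicit. Unset Printing Implicit Defensive.
Import Order.TTheory GRing.Theory Num.Theory.
Import numFieldNormedType.Exports.
Local Open Scope classical_set_scope.
Local Open Scope ring_scope.

Definition expo (d : nat) := {ffun 'I_d -> 'I_3}.
Definition mdeg (d : nat) (c : expo d) : nat := (\sum_(k < d) (c k : nat))%N.

Definition Mon (d : nat) := {c : expo d | (mdeg c <= 2)%N}.
Definition Psi (d w : nat) : set (Mon d) := [set c | mdeg (val c) = w].

Definition mono {R : ringType} (d : nat) (c : Mon d) (beta : d.-tuple R) : R :=
  \prod_(k < d) tnth beta k ^+ (val c k : nat).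

Definition record (R : Type) (d : nat) := (d.-tuple R * d.-tuple R)%type.

Definition l2norm {R : rcfType} (d : nat) (x : d.-tuple R) : R :=
  Num.sqrt (\sum_(k < d) tnth x k ^+ 2).

Definition Vrec {R : ringType} (d : nat) (r : record R d) : d.-tuple R :=
  [tuple tnth r.1 k - tnth r.2 k | k < d].

Definition dotp {R : ringType} (d : nat) (b v : d.-tuple R) : R :=
  \sum_(k < d) tnth b k * tnth v k.

(* f_1^{(k)}(0)/k! for f_1 = ln Phi, k = 0,1,2. *)
Definition taylor_coef {R : realType} (k : nat) : R :=
  match k with
  | 0 => ln (2^-1)
  | 1 => Num.sqrt (2 / pi)
  | _ => - pi^-1
  end.

Definition fhat {R : realType} (n d : nat) (D : 'I_n -> record R d)
  (beta : d.-tuple R) : R :=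
  \sum_(j < n) \sum_(k < 3) taylor_coef k * dotp beta (Vrec (D j)) ^+ k.

(* lambda_{phi,V}: the coefficient of the monomial phi_c in
   sum_{k=0}^2 taylor_coef k * (beta^T V)^k, i.e. by the multinomial theorem
   taylor_coef w * (w! / prod_k c_k!) * prod_k V[k]^{c_k}, w = deg c. *)
Definition lam_coef {R : realType} (d : nat) (c : Mon d) (V : d.-tuple R) : R :=
  taylor_coef (mdeg (val c)) * ((mdeg (val c))`!)%:R
  / (\prod_(k < d) ((val c k : nat)`!)%:R)
  * \prod_(k < d) tnth V k ^+ (val c k : nat).

Definition coefD {R : realType} (n d : nat) (D : 'I_n -> record R d) (c : Mon d) : R :=
  \sum_(j < n) lam_coef c (Vrec (D j)).

Definition Delta_upper {R : realType} (d : nat) : R :=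
  2 * Num.sqrt (2 * d%:R / pi) + 2 * d%:R / pi.

Definition laplace_pdf {R : realType} (b x : R) : R :=
  (2 * b)^-1 * expR (- `|x| / b).

Definition is_laplace {dO} {O : measurableType dO} {R : realType}
  (P : probability O R) (b : R) (X : O -> R) : Prop :=
  forall B : set R, measurable B ->
    P (X @^-1` B) = (\int[lebesgue_measure]_(x in B) (laplace_pdf b x)%:E)%E.

Definition mutually_independent {dO} {O : measurableType dO} {R : realType}
  (I : finType) (P : probability O R) (X : I -> O -> R) : Prop :=
  forall (J : {set I}) (B : I -> set R), (forall i, measurable (B i)) ->
    P (\bigcap_(i in [set i | i \in J]) (X i @^-1` B i)) =
    (\prod_(i in J) P (X i @^-1` B i))%E.

(* Coefficient space: the vector (lambda_phi)_phi, stored as a tuple indexed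
   by enum_rank of the monomial (so it carries the product sigma-algebra). *)
Definition ncoef (d : nat) := #|{: Mon d}|.

Definition fstar {R : realType} (d : nat) (lam : (ncoef d).-tuple R)
  (beta : d.-tuple R) : R :=
  \sum_(c : Mon d) tnth lam (enum_rank c) * mono c beta.

Definition noisy_coefs {R : realType} {O : Type} (n d : nat)
  (D : 'I_n -> record R d) (eta : Mon d -> O -> R) (w : O) : (ncoef d).-tuple R :=
  [tuple coefD D (enum_val i) + eta (enum_val i) w | i < ncoef d].

Definition argmax_selector {R : realType} (d : nat)
  (g : (ncoef d).-tuple R -> d.-tuple R) : Prop :=
  forall lam, (exists beta, forall beta', fstar lam beta' <= fstar lam beta) ->
    forall beta', fstar lam beta' <= fstar lam (g lam).

Definition valid_record {R : realType} (d : nat) (r : record R d) : Prop :=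
  l2norm r.1 <= 2^-1 /\ l2norm r.2 <= 2^-1.

(* Main.v *)
Require Import Defs.
From HB Require Import structures.
From mathcomp Require Import all_boot all_order all_algebra.
From mathcomp Require Import all_classical all_reals all_analysis.
From mathcomp Require Import measurable_realfun ring lra.
Set Implicit Arguments. Unset Strict Implicit. Unset Printing Implicit Defensive.
Import Order.TTheory GRing.Theory Num.Theory.
Import numFieldNormedType.Exports.
Local Open Scope classical_set_scope.
Local Open Scope ring_scope.

Lemma measurable_shift {R : realType} (s : R) : measurable_fun [set: R] (fun x => x + s).
Proof. by apply: measurable_funD => //; exact: measurable_cst. Qed.

Lemma lebesgue_shift {R : realType} (s : R) (A : set R) : measurable A ->
  lebesgue_measure ((fun x => x + s) @^-1` A) = lebesgue_measure A.
Proof.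
move=> mA.
have := @lebesgue_measure_unique R (pushforward (@lebesgue_measure R) (fun x : measurableTypeR R => (x + s : measurableTypeR R))).
move=> /(_ (measurable_shift s)) H; rewrite [RHS]H //.
move=> X [[a b] _ <-] /=.
rewrite /pushforward.
have -> : (fun x => x + s) @^-1` `]a, b]%classic = `](a - s), (b - s)]%classic.
  apply/seteqP; split => x /=; rewrite !in_itv /=.
    by move=> /andP[h1 h2]; apply/andP; split; lra.
  by move=> /andP[h1 h2]; apply/andP; split; lra.
rewrite !lebesgue_measure_itv /= !lte_fin.
have -> : (a - s < b - s) = (a < b) by rewrite ltrD2r.
by case: ifP => // _; rewrite -!EFinD; congr (_%:E); ring.
Qed.

Lemma measurable_laplace_pdf {R : realType} (b : R) :
  measurable_fun [set: R] (laplace_pdf b).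
Proof.
rewrite /laplace_pdf.
apply: measurable_funM; first exact: measurable_cst.
apply: measurableT_comp; first exact: measurable_expR.
apply: measurable_funM; last exact: measurable_cst.
apply: measurableT_comp => //.
Qed.

Lemma laplace_pdf_ge0 {R : realType} (b x : R) : 0 < b -> 0 <= laplace_pdf b x.
Proof.
move=> b0; rewrite /laplace_pdf mulr_ge0 ?expR_ge0 // invr_ge0 mulr_ge0 //; lra.
Qed.

Lemma laplace_pdf_shift {R : realType} (b s y : R) : 0 < b ->
  laplace_pdf b (y - s) <= expR (`|s| / b) * laplace_pdf b y.
Proof.
move=> b0; rewrite /laplace_pdf mulrCA ler_pM2l; last first.
  by rewrite invr_gt0; lra.
rewrite -expRD ler_expR -mulrDl ler_pM2r ?invr_gt0 //.
have := ler_normD (y - s) s; rewrite subrK.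
have : `|s| = `|- s| by rewrite normrN.
lra.
Qed.

Lemma laplace_shift_le {R : realType} (b s : R) (B : set R) : 0 < b -> measurable B ->
  (\int[lebesgue_measure]_(x in (fun x => (x + s)%R) @^-1` B) (laplace_pdf b x)%:E
   <= (expR (`|s| / b))%:E * \int[lebesgue_measure]_(x in B) (laplace_pdf b x)%:E)%E.
Proof.
move=> b0 mB.
have -> : (\int[lebesgue_measure]_(x in (fun x => (x + s)%R) @^-1` B) (laplace_pdf b x)%:E
  = \int[lebesgue_measure]_(x in (fun x => (x + s)%R) @^-1` B) ((fun y => (laplace_pdf b (y - s)%R)%:E) \o (fun x => (x + s)%R)) x)%E.
  by apply: eq_integral => x _ /=; rewrite addrK.
have mh : measurable_fun [set: measurableTypeR R]
  (fun x : measurableTypeR R => (x + s)%R : measurableTypeR R) := measurable_shift s.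
rewrite -(ge0_integral_pushforward mh lebesgue_measure) //; last 2 first.
- apply/measurable_EFinP; apply: measurableT_comp; first exact: measurable_laplace_pdf.
  by apply: measurable_funB => //; exact: measurable_cst.
- by move=> y _; rewrite lee_fin laplace_pdf_ge0.
rewrite (@eq_measure_integral _ _ _ _ lebesgue_measure); last first.
  by move=> A mA _; rewrite /pushforward; exact: lebesgue_shift.
rewrite -(@ge0_integralZl_EFin _ _ _ lebesgue_measure B mB (fun x => (laplace_pdf b x)%:E)); last 3 first.
- by move=> x _; rewrite lee_fin laplace_pdf_ge0.
- by apply/measurable_EFinP; apply: measurable_funTS; exact: measurable_laplace_pdf.
- exact: expR_ge0.
apply: ge0_le_integral => //.
- by move=> x _; rewrite lee_fin laplace_pdf_ge0.
- apply/measurable_EFinP; apply: measurable_funTS; apply: measurableT_comp; first exact: measurable_laplace_pdf.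
  by apply: measurable_funB => //; exact: measurable_cst.
- apply: emeasurable_funM; first exact: measurable_cst.
  by apply/measurable_EFinP; apply: measurable_funTS; exact: measurable_laplace_pdf.
- by move=> x _; rewrite -EFinM lee_fin laplace_pdf_shift.
Qed.

Definition mkmfun d1 d2 (T1 : measurableType d1) (T2 : measurableType d2)
  (f : T1 -> T2) (mf : measurable_fun setT f) : {mfun T1 >-> T2} :=
  mfun_Sub (mem_set mf).

Section pfs.
Context d d' (T1 : measurableType d) (T2 : measurableType d') (R : realType)
  (m : {measure set T1 -> \bar R}) (f : T1 -> T2) (mf : measurable_fun setT f).
Definition pf (_ : measurable_fun setT f) := pushforward m f.
Let pf0 : pf mf set0 = 0%E.
Proof. by rewrite /pf /pushforward preimage_set0 measure0. Qed.
Let pf_ge0 A : (0 <= pf mf A)%E.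
Proof. by rewrite /pf /pushforward; exact: measure_ge0. Qed.
Let pf_sigma_additive : semi_sigma_additive (pf mf).
Proof.
move=> F mF tF mUF; rewrite /pf /pushforward preimage_bigcup.
apply: measure_semi_sigma_additive.
- by move=> n; rewrite -[X in measurable X]setTI; exact: mf.
- apply/trivIsetP => /= i j _ _ ij; rewrite -preimage_setI.
  by move/trivIsetP : tF => /(_ _ _ _ _ ij) ->//; rewrite preimage_set0.
- by rewrite -preimage_bigcup -[X in measurable X]setTI; exact: mf.
Qed.
HB.instance Definition _ := isMeasure.Build _ _ _ (pf mf) pf0 pf_ge0 pf_sigma_additive.
End pfs.

Section prob.
Context {dO : measure_display} {O : measurableType dO} {R : realType} (P : probability O R).

Lemma laplace_prob_shift (X : O -> R) (b s : R) (B : set R) : 0 < b ->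
  is_laplace P b X -> measurable B ->
  (P ((fun w => (X w + s)%R) @^-1` B) <= (expR (`|s| / b))%:E * P (X @^-1` B))%E.
Proof.
move=> b0 hX mB.
have -> : (fun w => (X w + s)%R) @^-1` B = X @^-1` ((fun x => x + s) @^-1` B) by [].
have mB' : measurable ((fun x => x + s) @^-1` B).
  by rewrite -[X in measurable X]setTI; exact: (measurable_shift s).
rewrite !hX //.
exact: laplace_shift_le.
Qed.

Lemma shift1 d' (T' : measurableType d') (X : O -> R) (Y : O -> T') (b s : R)
  (S : set (T' * R)) :
  0 < b -> measurable_fun setT X -> measurable_fun setT Y -> is_laplace P b X ->
  (forall B C, measurable B -> measurable C ->
     P (X @^-1` B `&` Y @^-1` C) = (P (X @^-1` B) * P (Y @^-1` C))%E) ->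
  measurable S ->
  (P [set w | S (Y w, (X w + s)%R)] <= (expR (`|s| / b))%:E * P [set w | S (Y w, X w)])%E.
Proof.
move=> b0 mX mY hX ind mS.
have mYX : measurable_fun setT (fun w => (Y w, X w)) := measurable_fun_pair mY mX.
pose Q := distribution P (mkmfun mY).
pose L := distribution P (mkmfun mX).
pose J := distribution P (mkmfun mYX).
have JE : forall Z, measurable Z -> (Q \x L)%E Z = J Z.
  apply: product_measure_unique => A B mA mB.
  change (P ((fun w => (Y w, X w)) @^-1` (A `*` B)) = P (Y @^-1` A) * P (X @^-1` B))%E.
  have -> : (fun w => (Y w, X w)) @^-1` (A `*` B) = X @^-1` B `&` Y @^-1` A.
    by apply/seteqP; split=> w /= [].
  by rewrite ind // muleC.
pose h := fun z : T' * R => (z.1, z.2 + s).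
have mh : measurable_fun setT h.
  apply: measurable_fun_pair => //.
  by apply: measurable_funD => //; exact: measurable_cst.
have mS' : measurable (h @^-1` S).
  by rewrite -[X in measurable X]setTI; exact: mh.
have -> : [set w | S (Y w, X w + s)] = (fun w => (Y w, X w)) @^-1` (h @^-1` S) by [].
have -> : [set w | S (Y w, X w)] = (fun w => (Y w, X w)) @^-1` S by [].
change (J (h @^-1` S) <= (expR (`|s| / b))%:E * J S)%E.
rewrite -!JE //.
rewrite /product_measure1 /=.
rewrite -ge0_integralZl_EFin //; last exact: measurable_fun_xsection.
apply: ge0_le_integral => //.
- exact: measurable_fun_xsection.
- apply: emeasurable_funM; first exact: measurable_cst.
  exact: measurable_fun_xsection.
move=> y _ /=.
change (P (X @^-1` xsection (h @^-1` S) y) <= (expR (`|s| / b))%:E * P (X @^-1` xsection S y))%E.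
have -> : xsection (h @^-1` S) y = (fun x => x + s) @^-1` (xsection S y).
  by apply/seteqP; split => x; rewrite /xsection /h /= !inE.
apply: laplace_prob_shift => //.
exact: measurable_xsection.
Qed.
End prob.

Section tupleS.
Context {dO : measure_display} {O : measurableType dO} {R : realType} (P : probability O R).
Variable m : nat.

Lemma prob_fin (A : set O) : measurable A -> P A \is a fin_num.
Proof.
move=> mA; rewrite ge0_fin_numE ?measure_ge0 //.
exact: (le_lt_trans (probability_le1 P mA)) (ltry _).
Qed.

Definition rect (Cs : 'I_m -> set R) : set (m.-tuple R) :=
  [set t | forall i, Cs i (tnth t i)].
Definition rects : set (set (m.-tuple R)) :=
  [set rect Cs | Cs in [set Cs | forall i, measurable (Cs i)]].

Lemma rect_measurable Cs : (forall i, measurable (Cs i)) -> measurable (rect Cs).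
Proof.
move=> mC.
have -> : rect Cs = \bigcap_(i in [set: 'I_m]) ((fun t : m.-tuple R => tnth t i) @^-1` Cs i).
  by apply/seteqP; split => t /= h i; [move=> _; exact: h|exact: h].
apply: fin_bigcap_measurable; first exact: finite_finset.
move=> i _; rewrite -[X in measurable X]setTI; exact: measurable_tnth.
Qed.

Lemma measurable_sub_rects (A : set (m.-tuple R)) : measurable A -> <<s rects>> A.
Proof.
move: A; apply: smallest_sub; first exact: smallest_sigma_algebra.
apply: (big_ind (fun X => X `<=` <<s rects>>)) => //.
- by move=> X Y hX hY Z [/hX|/hY].
- move=> i _ Z [B mB <-]; apply: sub_sigma_algebra.
  exists (fun j => if j == i then B else setT).
    by move=> j /=; case: ifP.
  apply/seteqP; split => t /=.
  - by move=> h; split => //; have := h i; rewrite eqxx.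
  - by move=> [_ h] j; case: ifP => // /eqP ->.
Qed.

Variables (Xs : 'I_m -> O -> R).
Hypothesis mXs : forall i, measurable_fun setT (Xs i).
Hypothesis indT : forall B : 'I_m -> set R, (forall i, measurable (B i)) ->
  P (\bigcap_(i in [set: 'I_m]) (Xs i @^-1` B i)) = (\prod_(i < m) P (Xs i @^-1` B i))%E.

Definition Yk (k : 'I_m) (w : O) : m.-tuple R :=
  [tuple if i == k then 0 else Xs i w | i < m].

Lemma measurable_Yk k : measurable_fun setT (Yk k).
Proof.
apply/measurable_fun_tnthP => i.
set f := (X in measurable_fun _ X).
have -> : f = (fun w => if i == k then 0 else Xs i w).
  by apply: funext => w; rewrite /f /= tnth_mktuple.
case: (i == k) => //; exact: measurable_cst.
Qed.

Lemma indep_Yk k (B : set R) (C : set (m.-tuple R)) : measurable B -> measurable C ->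
  P (Xs k @^-1` B `&` Yk k @^-1` C) = (P (Xs k @^-1` B) * P (Yk k @^-1` C))%E.
Proof.
move=> mB mC.
have mXB : measurable (Xs k @^-1` B).
  by rewrite -[X in measurable X]setTI; exact: mXs.
have r0 : (0 <= fine (P (Xs k @^-1` B)))%R by apply: fine_ge0; exact: measure_ge0.
pose m1 := pf (mrestr P mXB) (measurable_Yk k).
pose m2 := mscale (NngNum r0) (pf P (measurable_Yk k)).
have : m1 C = m2 C.
  apply: (g_sigma_algebra_measure_unique rects _ (fun _ => setT)).
  - by move=> X [Cs mCs <-]; exact: rect_measurable.
  - move=> _; exists (fun _ => setT) => //.
    by apply/seteqP; split => t.
  - by apply/seteqP; split => // t _; exists 0%N.
  - move=> X Y [Cs mCs <-] [Ds mDs <-].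
    exists (fun i => Cs i `&` Ds i); first by move=> i; exact: measurableI.
    by apply/seteqP; split => t /=; [move=> h; split => i; case: (h i)|move=> [h1 h2] i; split].
  - move=> _ [Cs mCs <-].
    change (P (Yk k @^-1` rect Cs `&` Xs k @^-1` B) =
      ((fine (P (Xs k @^-1` B)))%:E * P (Yk k @^-1` rect Cs))%E).
    rewrite fineK; last exact: prob_fin.
    case: (pselect (Cs k 0)) => h0.
    + have E1 : Yk k @^-1` rect Cs =
          \bigcap_(i in [set: 'I_m]) (Xs i @^-1` (if i == k then setT else Cs i)).
        apply/seteqP; split => w /=.
        * by move=> h i _; have := h i; rewrite tnth_mktuple; case: ifP.
        * move=> h i; rewrite tnth_mktuple; case: ifP => [/eqP ->|ik] //.
          by have := h i I; rewrite ik.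
      have E2 : Yk k @^-1` rect Cs `&` Xs k @^-1` B =
          \bigcap_(i in [set: 'I_m]) (Xs i @^-1` (if i == k then B else Cs i)).
        apply/seteqP; split => w /=.
        * move=> [h hB] i _; have := h i; rewrite tnth_mktuple; case: ifP => // /eqP ->.
          by move=> _.
        * move=> h; split; last by have := h k I; rewrite eqxx.
          move=> i; rewrite tnth_mktuple; case: ifP => [/eqP ->|ik] //.
          by have := h i I; rewrite ik.
      rewrite E2 E1 !indT; last 2 first.
      * by move=> i; case: ifP.
      * by move=> i; case: ifP.
      rewrite (bigD1 k) //= [in RHS](bigD1 k) //= !eqxx preimage_setT probability_setT mul1e.
      by congr (_ * _)%E; apply: eq_bigr => i /negPf ->.
    + have E1 : Yk k @^-1` rect Cs = set0.
        apply/seteqP; split => w // h; apply: h0.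
        by have := h k; rewrite tnth_mktuple eqxx.
      by rewrite E1 set0I measure0 mule0.
  - move=> _; rewrite /m1 /pf /mrestr /pushforward /=.
    apply: (le_lt_trans (probability_le1 P _)) (ltry _).
    by apply: measurableI => //; rewrite -[X in measurable X]setTI; exact: measurable_Yk.
  - exact: measurable_sub_rects.
rewrite /m1 /m2 /pf /mrestr /mscale /pushforward /= fineK; last exact: prob_fin.
by rewrite setIC.
Qed.

Variable b : R.
Hypothesis b0 : 0 < b.
Hypothesis lapXs : forall i, is_laplace P b (Xs i).

Definition noisy (c : m.-tuple R) (w : O) : m.-tuple R :=
  [tuple tnth c i + Xs i w | i < m].

Lemma coord_step (c c' : m.-tuple R) (k : 'I_m) (A : set (m.-tuple R)) :
  measurable A -> (forall i, i != k -> tnth c i = tnth c' i) ->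
  (P (noisy c @^-1` A) <=
   (expR (`|tnth c k - tnth c' k| / b))%:E * P (noisy c' @^-1` A))%E.
Proof.
move=> mA hcc.
pose F := fun z : m.-tuple R * R => [tuple if i == k then tnth c' k + z.2
  else tnth c' i + tnth z.1 i | i < m].
have mF : measurable_fun setT F.
  apply/measurable_fun_tnthP => i.
  set f := (X in measurable_fun _ X).
  have -> : f = (fun z => if i == k then tnth c' k + z.2 else tnth c' i + tnth z.1 i).
    by apply: funext => z; rewrite /f /= tnth_mktuple.
  case: (i == k).
  - by apply: measurable_funD => //; exact: measurable_cst.
  - apply: measurable_funD; first exact: measurable_cst.
    exact: measurableT_comp (measurable_tnth i) measurable_fst.
have mS : measurable (F @^-1` A) by rewrite -[X in measurable X]setTI; exact: mF.
have := shift1 (tnth c k - tnth c' k) b0 (mXs k) (measurable_Yk k) (lapXs k)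
  (indep_Yk k) mS.
have NE : forall w, noisy c w = F (Yk k w, Xs k w + (tnth c k - tnth c' k)).
  move=> w; apply: eq_from_tnth => i; rewrite !tnth_mktuple /=.
  case: eqP => [->|/eqP ik]; last by rewrite hcc.
  lra.
have NE' : forall w, noisy c' w = F (Yk k w, Xs k w).
  move=> w; apply: eq_from_tnth => i; rewrite !tnth_mktuple /=.
  by case: eqP => [->|/eqP ik] //; rewrite ?tnth_mktuple (negPf ik).
have -> : noisy c @^-1` A = [set w | (F @^-1` A) (Yk k w, (Xs k w + (tnth c k - tnth c' k))%R)].
  by apply/seteqP; split => w /=; rewrite NE.
have -> : noisy c' @^-1` A = [set w | (F @^-1` A) (Yk k w, Xs k w)].
  by apply/seteqP; split => w /=; rewrite NE'.
done.
Qed.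

Definition hyb (a a' : m.-tuple R) (k : nat) : m.-tuple R :=
  [tuple if (i < k)%N then tnth a' i else tnth a i | i < m].

Lemma hybrid (a a' : m.-tuple R) (A : set (m.-tuple R)) : measurable A ->
  forall k, (k <= m)%N ->
  (P (noisy a @^-1` A) <=
   (expR (\sum_(i < m | (i < k)%N) (`|tnth a i - tnth a' i| / b)))%:E *
     P (noisy (hyb a a' k) @^-1` A))%E.
Proof.
move=> mA; elim => [|k IH] km.
  rewrite big_pred0 => [|i]; last by rewrite ltn0.
  rewrite expR0 mul1e.
  have -> : hyb a a' 0 = a by apply: eq_from_tnth => i; rewrite tnth_mktuple.
  by [].
pose ko : 'I_m := Ordinal km.
apply: (le_trans (IH (ltnW km))).
have step := @coord_step (hyb a a' k) (hyb a a' k.+1) ko A mA.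
have hh : forall i, i != ko -> tnth (hyb a a' k) i = tnth (hyb a a' k.+1) i.
  move=> i ik; rewrite !tnth_mktuple.
  have ik' : (nat_of_ord i != k) by apply: contra ik => /eqP h; apply/eqP/val_inj.
  case: (ltnP i k) => h1; first by rewrite ltnS ltnW.
  have : (k < i)%N by rewrite ltn_neqAle eq_sym ik' h1.
  by rewrite ltnNge ltnS => /negbTE ->.
have {}step := step hh.
have e1 : tnth (hyb a a' k) ko = tnth a ko by rewrite tnth_mktuple ltnn.
have e2 : tnth (hyb a a' k.+1) ko = tnth a' ko by rewrite tnth_mktuple ltnSn.
rewrite e1 e2 in step.
apply: le_trans (lee_wpmul2l _ step) _; first by rewrite lee_fin expR_ge0.
rewrite muleA -EFinM -expRD.
rewrite [X in (_ <= (expR X)%:E * _)%E](bigD1 ko) //= ?ltnSn // addrC.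
have -> : \sum_(i < m | (i < k.+1)%N && (i != ko)) (`|tnth a i - tnth a' i| / b) =
          \sum_(i < m | (i < k)%N) (`|tnth a i - tnth a' i| / b).
  apply: eq_bigl => i.
  case: (eqVneq i ko) => [->|ik] /=; first by rewrite ltnn andbF.
  have ik' : (nat_of_ord i != k) by apply: contra ik => /eqP h; apply/eqP/val_inj.
  rewrite andbT; case: (ltnP i k) => h1; first by rewrite ltnS ltnW.
  have : (k < i)%N by rewrite ltn_neqAle eq_sym ik' h1.
  by rewrite ltnNge ltnS => /negbTE ->.
by [].
Qed.

Lemma tuple_dp (a a' : m.-tuple R) (A : set (m.-tuple R)) : measurable A ->
  (P (noisy a @^-1` A) <=
   (expR (\sum_(i < m) `|tnth a i - tnth a' i| / b))%:E * P (noisy a' @^-1` A))%E.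
Proof.
move=> mA; have := hybrid a a' mA (leqnn m).
have -> : hyb a a' m = a' by apply: eq_from_tnth => i; rewrite tnth_mktuple ltn_ord.
rewrite (eq_bigl xpredT) => [|i]; last by rewrite ltn_ord.
by rewrite -mulr_suml.
Qed.

End tupleS.

Section comb.
Context {R : realType}.

Definition gpol (y : R) : {poly R} := 1 + y *: 'X + (y ^+ 2 / 2) *: 'X^2.

Lemma gpol_coef (y : R) : [/\ (gpol y)`_0 = 1, (gpol y)`_1 = y & (gpol y)`_2 = y ^+ 2 / 2].
Proof. by rewrite /gpol !coefD !coefZ !coefXn !coefX !coef1 /=; split; rewrite ?mulr1 ?mulr0 ?addr0 ?add0r. Qed.

Lemma prod_gpol (s : seq R) :
  let p := \prod_(y <- s) gpol y in let S := \sum_(y <- s) y in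
  [/\ p`_0 = 1, p`_1 = S & p`_2 = S ^+ 2 / 2].
Proof.
elim: s => [|a s IH] /=.
  by rewrite !big_nil !coef1 /=; split => //; rewrite expr2 !mul0r.
move: IH => [h0 h1 h2].
have [g0 g1 g2] := gpol_coef a.
rewrite !big_cons !coefM !big_ord_recr !big_ord0 /= !add0r !subn0 !subnn.
rewrite (_ : (2 - 1)%N = 1%N) //.
rewrite g0 g1 g2 h0 h1 h2; split.
- by rewrite mulr1.
- by rewrite mul1r mulr1 addrC.
- set S := \sum_(j <- s) j.
  by rewrite mul1r mulr1; field.
Qed.

Lemma gpolE (y : R) : gpol y = \sum_(j : 'I_3) (y ^+ j / (j`!)%:R) *: 'X^j.
Proof.
rewrite /gpol !big_ord_recr big_ord0 /= add0r.
rewrite expr0 expr1 !divr1 !scale1r.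
by rewrite (_ : (2`!)%:R = 2 :> R).
Qed.

Lemma expand (d : nat) (x : 'I_d -> R) :
  \prod_(k < d) gpol (x k) =
  \sum_(c : expo d) (\prod_(k < d) (x k ^+ c k / ((c k)`!)%:R)) *: 'X^(mdeg c).
Proof.
under eq_bigr do rewrite gpolE.
rewrite bigA_distr_bigA /=.
apply: eq_bigr => c _.
rewrite (eq_bigr (fun k => (x k ^+ c k / ((c k)`!)%:R)%:P * 'X^(c k))); last first.
  by move=> k _; rewrite mul_polyC.
rewrite big_split /= -rmorph_prod prodrXr mul_polyC.
by [].
Qed.

Lemma coef_expand (d : nat) (x : 'I_d -> R) (n : nat) :
  (\prod_(k < d) gpol (x k))`_n =
  \sum_(c : expo d | mdeg c == n) \prod_(k < d) (x k ^+ c k / ((c k)`!)%:R).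
Proof.
rewrite expand coef_sum [RHS]big_mkcond /=.
apply: eq_bigr => c _; rewrite coefZ coefXn eq_sym.
by case: eqP => _; rewrite ?mulr1 ?mulr0.
Qed.

Lemma prod_gpol_ord (d : nat) (x : 'I_d -> R) :
  let p := \prod_(k < d) gpol (x k) in let S := \sum_(k < d) x k in
  [/\ p`_0 = 1, p`_1 = S & p`_2 = S ^+ 2 / 2].
Proof.
have := prod_gpol [seq x k | k <- index_enum 'I_d].
by rewrite !big_map.
Qed.

Lemma multinom1 (d : nat) (x : 'I_d -> R) :
  \sum_(c : expo d | mdeg c == 1%N) \prod_(k < d) (x k ^+ c k / ((c k)`!)%:R) =
  \sum_(k < d) x k.
Proof. by rewrite -coef_expand; case: (prod_gpol_ord x). Qed.

Lemma multinom2 (d : nat) (x : 'I_d -> R) :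
  \sum_(c : expo d | mdeg c == 2%N) \prod_(k < d) (x k ^+ c k / ((c k)`!)%:R) =
  (\sum_(k < d) x k) ^+ 2 / 2.
Proof. by rewrite -coef_expand; case: (prod_gpol_ord x). Qed.
End comb.

Section sens.
Context {R : realType}.

Lemma sum_Mon (d : nat) (P : pred (expo d)) (F : expo d -> R) :
  (forall c, P c -> (mdeg c <= 2)%N) ->
  \sum_(c : Mon d | P (val c)) F (val c) = \sum_(c : expo d | P c) F c.
Proof.
move=> HP; rewrite [RHS](reindex_omap (val : Mon d -> expo d) insub); last first.
  by move=> c Pc; rewrite (@insubT _ (fun c : expo d => (mdeg c <= 2)%N) _ c (HP c Pc)).
by apply: eq_bigl => c; rewrite valK eqxx andbT.
Qed.

Lemma cle_mdeg (d : nat) (c : expo d) (k : 'I_d) : (c k <= mdeg c)%N.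
Proof. by rewrite /mdeg (bigD1 k) //= leq_addr. Qed.

Lemma lam_coef_norm (d : nat) (c : Mon d) (V : d.-tuple R) :
  `|lam_coef c V| = `|taylor_coef (mdeg (val c))| * ((mdeg (val c))`!)%:R *
     \prod_(k < d) (`|tnth V k| ^+ (val c k) / (((val c k)`!)%:R)).
Proof.
rewrite /lam_coef !normrM normr_nat -mulrA; congr (_ * _ * _).
rewrite prodf_div normfV normr_prod mulrC.
rewrite normr_prod; congr (_ / _); apply: eq_bigr => k _.
  by rewrite normrX.
by rewrite normr_nat.
Qed.


Lemma sum_lam_deg (d : nat) (V : d.-tuple R) (w : nat) : (w <= 2)%N ->
  \sum_(c : Mon d | mdeg (val c) == w) `|lam_coef c V| =
  `|taylor_coef w| * (w`!)%:R *
  \sum_(c : expo d | mdeg c == w) \prod_(k < d) (`|tnth V k| ^+ c k / ((c k)`!)%:R).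
Proof.
move=> hw.
pose F := fun e : expo d => `|taylor_coef (mdeg e)| * ((mdeg e)`!)%:R *
  \prod_(k < d) (`|tnth V k| ^+ e k / ((e k)`!)%:R).
rewrite (eq_bigr (fun c => F (val c))); last first.
  by move=> c _; rewrite lam_coef_norm.
rewrite (@sum_Mon d (fun e => mdeg e == w) F); last by move=> c /eqP ->.
by rewrite mulr_sumr; apply: eq_bigr => c /eqP <-.
Qed.

Lemma cs_ineq (d : nat) (x : 'I_d -> R) :
  (\sum_(k < d) `|x k|) ^+ 2 <= d%:R * \sum_(k < d) x k ^+ 2.
Proof.
rewrite expr2 mulr_suml.
under eq_bigr do rewrite mulr_sumr.
apply: (@le_trans _ _ (\sum_(k < d) \sum_(l < d) ((x k ^+ 2 + x l ^+ 2) / 2))).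
  apply: ler_sum => k _; apply: ler_sum => l _.
  rewrite -(real_normK (num_real (x k))) -(real_normK (num_real (x l))).
  have := sqr_ge0 (`|x k| - `|x l|); nra.
rewrite (eq_bigr (fun k => (d%:R * x k ^+ 2 + \sum_(l < d) x l ^+ 2) / 2)); last first.
  move=> k _; rewrite -mulr_suml big_split /= sumr_const card_ord mulr_natl.
  by [].
rewrite -mulr_suml big_split /= sumr_const card_ord -mulr_sumr.
rewrite -mulr_natl mulr1; set S := \sum_(k < d) x k ^+ 2; lra.
Qed.

Lemma l1_le (d : nat) (x : d.-tuple R) :
  \sum_(k < d) `|tnth x k| <= Num.sqrt d%:R * l2norm x.
Proof.
rewrite /l2norm -sqrtrM ?ler0n //.
rewrite -(ger0_norm (sumr_ge0 _ (fun k _ => normr_ge0 (tnth x k)))).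
rewrite -sqrtr_sqr ler_sqrt; last first.
  by apply: mulr_ge0 => //; apply: sumr_ge0 => k _; exact: sqr_ge0.
exact: cs_ineq.
Qed.

Lemma l1_Vrec (d : nat) (r : record R d) : valid_record r ->
  \sum_(k < d) `|tnth (Vrec r) k| <= Num.sqrt d%:R.
Proof.
move=> [h1 h2].
apply: (@le_trans _ _ (\sum_(k < d) `|tnth r.1 k| + \sum_(k < d) `|tnth r.2 k|)).
  rewrite -big_split /=; apply: ler_sum => k _; rewrite tnth_mktuple.
  exact: ler_normB.
have := l1_le r.1; have := l1_le r.2.
have hs := sqrtr_ge0 (d%:R : R).
move=> a b.
have c1 := ler_wpM2l hs h1; have c2 := ler_wpM2l hs h2.
lra.
Qed.

Lemma sens_one (d : nat) (V : d.-tuple R) :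
  \sum_(k < d) `|tnth V k| <= Num.sqrt d%:R ->
  \sum_(c : Mon d | mdeg (val c) == 1%N) `|lam_coef c V| +
  \sum_(c : Mon d | mdeg (val c) == 2%N) `|lam_coef c V| <=
  Num.sqrt (2 * d%:R / pi) + d%:R / pi.
Proof.
move=> hL.
rewrite !sum_lam_deg // multinom1 multinom2 /taylor_coef.
set L := \sum_(k < d) `|tnth V k|.
have L0 : 0 <= L by apply: sumr_ge0 => k _.
have pi0 : 0 < (pi : R) := pi_gt0 R.
rewrite ger0_norm ?sqrtr_ge0 // normrN ger0_norm; last by rewrite invr_ge0 ltW.
rewrite (_ : (1`!)%:R = 1 :> R) // (_ : (2`!)%:R = 2 :> R) // mulr1.
rewrite (_ : 2 * d%:R / pi = (2 / pi) * d%:R :> R); last by rewrite mulrAC.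
rewrite [Num.sqrt (2 / pi * _)]sqrtrM; last by rewrite divr_ge0 // ltW.
apply: lerD.
  by apply: ler_wpM2l => //; exact: sqrtr_ge0.
have hL2 : L ^+ 2 <= d%:R.
  rewrite -(sqr_sqrtr (ler0n _ d)); apply: lerXn2r => //; rewrite ?nnegrE //.
set p := (pi : R)^-1; have -> : p * 2 * (L ^+ 2 / 2) = L ^+ 2 * p by field.
by apply: ler_wpM2r => //; rewrite /p invr_ge0 ltW.
Qed.

Lemma lam_coef_deg0 (d : nat) (c : Mon d) (V V' : d.-tuple R) :
  mdeg (val c) = 0%N -> lam_coef c V = lam_coef c V'.
Proof.
move=> h0.
have hk : forall k, (val c k : nat) = 0%N.
  by move=> k; have := cle_mdeg (val c) k; rewrite h0 leqn0 => /eqP.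
rewrite /lam_coef.
rewrite (@big1 _ _ _ _ _ _ (fun k => tnth V k ^+ val c k)); last by move=> k _; rewrite hk expr0.
rewrite (@big1 _ _ _ _ _ _ (fun k => tnth V' k ^+ val c k)) //.
by move=> k _; rewrite hk expr0.
Qed.

Lemma sens (n d : nat) (D D' : 'I_n -> record R d) (j0 : 'I_n) :
  valid_record (D j0) -> valid_record (D' j0) ->
  (forall j, j != j0 -> D j = D' j) ->
  \sum_(c : Mon d) `|Defs.coefD D c - Defs.coefD D' c| <= Delta_upper d.
Proof.
move=> v1 v2 hdiff.
set V := Vrec (D j0); set V' := Vrec (D' j0).
have E : forall c, Defs.coefD D c - Defs.coefD D' c = lam_coef c V - lam_coef c V'.
  move=> c; rewrite /Defs.coefD (bigD1 j0) //= [X in _ - X](bigD1 j0) //=.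
  rewrite (eq_bigr (fun j => lam_coef c (Vrec (D' j))) (P := fun j => j != j0)); last first.
    by move=> j hj; rewrite hdiff.
  by rewrite opprD addrACA subrr addr0.
under eq_bigr do rewrite E.
rewrite (bigID (fun c => mdeg (val c) == 0%N)) /=.
rewrite big1; last first.
  by move=> c /eqP h0; rewrite (lam_coef_deg0 V V' h0) subrr normr0.
rewrite add0r (bigID (fun c => mdeg (val c) == 1%N)) /=.
rewrite (eq_bigl (fun c => mdeg (val c) == 2%N)
  (P1 := fun c => (mdeg (val c) != 0%N) && (mdeg (val c) != 1%N))); last first.
  move=> c /=; have := valP c; rewrite /=.
  by case: (mdeg (val c)) => [|[|[|m]]].
rewrite (eq_bigl (fun c => mdeg (val c) == 1%N)
  (P1 := fun c => (mdeg (val c) != 0%N) && (mdeg (val c) == 1%N))); last first.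
  by move=> c /=; case: (mdeg (val c)) => [|[|m]].
have i1 : \sum_(c : Mon d | mdeg (val c) == 1%N) `|lam_coef c V - lam_coef c V'| <=
    \sum_(c : Mon d | mdeg (val c) == 1%N) `|lam_coef c V| +
    \sum_(c : Mon d | mdeg (val c) == 1%N) `|lam_coef c V'|.
  by rewrite -big_split /=; apply: ler_sum => c _; exact: ler_normB.
have i2 : \sum_(c : Mon d | mdeg (val c) == 2%N) `|lam_coef c V - lam_coef c V'| <=
    \sum_(c : Mon d | mdeg (val c) == 2%N) `|lam_coef c V| +
    \sum_(c : Mon d | mdeg (val c) == 2%N) `|lam_coef c V'|.
  by rewrite -big_split /=; apply: ler_sum => c _; exact: ler_normB.
have b1 := sens_one (l1_Vrec v1).
have b2 := sens_one (l1_Vrec v2).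
rewrite /Delta_upper.
lra.
Qed.
End sens.

Unset Implicit Arguments.

Theorem theorem5 (R : realType) (n d : nat) (eps : R)
  (dO : measure_display) (O : measurableType dO) (P : probability O R)
  (eta : Mon d -> O -> R)
  (g : (ncoef d).-tuple R -> d.-tuple R) :
  (1 <= n)%N -> (1 <= d)%N -> 0 < eps ->
  (forall c, measurable_fun [set: O] (eta c)) ->
  mutually_independent P eta ->
  (forall c, is_laplace P (Delta_upper d / eps) (eta c)) ->
  measurable_fun [set: (ncoef d).-tuple R] g ->
  argmax_selector g ->
  forall (D D' : 'I_n -> record R d),
    (forall j, valid_record (D j)) -> (forall j, valid_record (D' j)) ->
    (exists j0 : 'I_n, D j0 <> D' j0 /\ forall j, j != j0 -> D j = D' j) ->
  forall Y : set (d.-tuple R), measurable Y ->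
    (P ((fun w => g (noisy_coefs D eta w)) @^-1` Y)
      <= (expR eps)%:E * P ((fun w => g (noisy_coefs D' eta w)) @^-1` Y))%E.
Proof.
move=> hn hd heps meta hind hlap mg _ D D' vD vD' [j0 [_ hsame]] Y mY.
pose m := ncoef d.
pose Xs : 'I_m -> O -> R := fun i => eta (enum_val i).
pose a : m.-tuple R := [tuple Defs.coefD D (enum_val i) | i < m].
pose a' : m.-tuple R := [tuple Defs.coefD D' (enum_val i) | i < m].
have NE : forall w, noisy_coefs D eta w = noisy Xs a w.
  by move=> w; apply: eq_from_tnth => i; rewrite !tnth_mktuple.
have NE' : forall w, noisy_coefs D' eta w = noisy Xs a' w.
  by move=> w; apply: eq_from_tnth => i; rewrite !tnth_mktuple.
have mA : measurable (g @^-1` Y) by rewrite -[X in measurable X]setTI; exact: mg.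
have -> : (fun w => g (noisy_coefs D eta w)) @^-1` Y = noisy Xs a @^-1` (g @^-1` Y).
  by apply/seteqP; split => w /=; rewrite NE.
have -> : (fun w => g (noisy_coefs D' eta w)) @^-1` Y = noisy Xs a' @^-1` (g @^-1` Y).
  by apply/seteqP; split => w /=; rewrite NE'.
have Dpos : 0 < Delta_upper d :> R.
  rewrite /Delta_upper.
  have h1 : 0 < 2 * d%:R / pi :> R.
    by apply: divr_gt0; [rewrite mulr_gt0 // ltr0n|exact: pi_gt0].
  have := sqrtr_ge0 (2 * d%:R / pi : R); lra.
have b0 : 0 < Delta_upper d / eps :> R by exact: divr_gt0.
have indT : forall B : 'I_m -> set R, (forall i, measurable (B i)) ->
    P (\bigcap_(i in [set: 'I_m]) (Xs i @^-1` B i)) = (\prod_(i < m) P (Xs i @^-1` B i))%E.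
  move=> B mB.
  have := hind [set: Mon d]%SET (fun c => B (enum_rank c)) (fun c => mB _).
  have -> : \bigcap_(i in [set i | i \in [set: Mon d]%SET]) (eta i @^-1` B (enum_rank i)) =
            \bigcap_(i in [set: 'I_m]) (Xs i @^-1` B i).
    apply/seteqP; split => w /= h i _.
    - by have := h (enum_val i); rewrite enum_valK; apply; rewrite /= inE.
    - by have := h (enum_rank i) I; rewrite /Xs enum_rankK.
  move=> ->; rewrite (reindex _ (onW_bij _ (enum_val_bij (Mon d)))) /=.
  rewrite (eq_bigl xpredT) => [|i]; last by rewrite inE.
  by apply: eq_bigr => i _; rewrite enum_valK.
apply: le_trans (tuple_dp (fun i => meta (enum_val i)) indT b0 (fun i => hlap (enum_val i)) a a' mA) _.
apply: lee_wpmul2r; first exact: measure_ge0.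
rewrite lee_fin ler_expR -mulr_suml ler_pdivrMr // mulrC divfK ?gt_eqF //.
have -> : \sum_(i < m) `|tnth a i - tnth a' i| =
          \sum_(c : Mon d) `|Defs.coefD D c - Defs.coefD D' c|.
  rewrite [RHS](reindex _ (onW_bij _ (enum_val_bij (Mon d)))) /=.
  by apply: eq_bigr => i _; rewrite !tnth_mktuple.
exact: sens (vD j0) (vD' j0) hsame.
Qed.
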